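(* Let $B$ be a real number with $1\le B<\infty$ and $\varepsilon=2^{-B}$. Let $n\ge1$, $x^n\in\mathcal{X}^n$, and $\mathbf{P}^n=\mathbf{P}_1,\dots,\mathbf{P}_n$ a sequence of probability matrices over $\mathcal{P}_\varepsilon$ (with $m$ models; write $p_{k,i}$ for the $i$-th model distribution of $\mathbf{P}_k$). For $1\le k\le l\le n$ let $\ell^*(k,l,\textsc{best}):=\min_{1\le i\le m}\sum_{j=k}^l-\log_2p_{j,i}(x_j)$. Minima below range over all $1\le s\le n$ and integers $t_1=1<t_2<\dots<t_s<t_{s+1}=n+1$. Then for every $\mathbf{w}_1\in\mathcal{S}$, Algorithm $\textsc{mix-ogd}$ with parameter space $\mathcal{W}=\mathcal{S}$ satisfies, writing $L:=\ell(x^n,\textsc{mix-ogd}(\mathbf{w}_1,\alpha,x^n,\mathbf{P}^n))$: 1. for $\textsc{mix}=\textsc{lin}$ and $\alpha=\frac{8B}{17m4^B}$: $L\le\min_{s,t_2,\dots,t_s}\big[2\sum_{i=1}^s\ell^*(t_i,t_{i+1}-1,\textsc{best})+\frac{17ms4^B}{4B}\big]$; 2. for $\textsc{mix}=\textsc{lin}$ and $\alpha=\frac{8B/\sqrt n}{17m4^B}$: $L\le\min_{s,t_2,\dots,t_s}\big[\sum_{i=1}^s\ell^*(t_i,t_{i+1}-1,\textsc{best})+\frac{35ms4^B}{4B}\sqrt n\big]$; 3. for $\textsc{mix}=\textsc{geo}$ and $\alpha=\frac{10}{7mB^2}$: $L\le\min_{s,t_2,\dots,t_s}\big[2\sum_{i=1}^s\ell^*(t_i,t_{i+1}-1,\textsc{best})+\frac{7msB^2}{5}\big]$;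 4. for $\textsc{mix}=\textsc{geo}$ and $\alpha=\frac{10/\sqrt n}{7mB^2}$: $L\le\min_{s,t_2,\dots,t_s}\big[\sum_{i=1}^s\ell^*(t_i,t_{i+1}-1,\textsc{best})+\frac{19msB^2}{10}\sqrt n\big]$.
   Context: $\mathcal{X}=\{1,\dots,N\}$, $1<N<\infty$; $m>1$. $\mathcal{P}_\varepsilon$ is the set of probability distributions on $\mathcal{X}$ assigning probability at least $\varepsilon$ to every letter. A probability matrix over $\mathcal{P}_\varepsilon$ is $\mathbf{P}=(\mathbf{p}(1)\cdots\mathbf{p}(N))$ with $\mathbf{p}(x)=(p_1(x),\dots,p_m(x))^{\mathsf T}$, $p_i\in\mathcal{P}_\varepsilon$. $\mathcal{S}=\{\mathbf{w}\in\mathbb{R}^m:\mathbf{w}\ge0,\ \sum_iw_i=1\}$. $\ell(x,p):=-\log_2p(x)$. Linear mixture: $\textsc{lin}(x;\mathbf{w},\mathbf{P}):=\mathbf{w}^{\mathsf T}\mathbf{p}(x)$; geometric mixture: $\textsc{geo}(x;\mathbf{w},\mathbf{P}):=\prod_ip_i(x)^{w_i}/\sum_{y\in\mathcal{X}}\prod_ip_i(y)^{w_i}$. Algorithm $\textsc{mix-ogd}(\mathbf{w}_1,\alpha,x^n,\mathbf{P}^n)$ for a mixture $\textsc{mix}$ with parameter space $\mathcal{W}$: for $k=1,\dots,n$ code $x_k$ with $\ell(x_k,\textsc{mix}(\mathbf{w}_k,\mathbf{P}_k))$ bits and set $\mathbf{w}_{k+1}=\mathrm{proj}(\mathbf{w}_k-\alpha\nabla_{\mathbf{w}}\ell(x_k,\textsc{mix}(\mathbf{w},\mathbf{P}_k))|_{\mathbf{w}=\mathbf{w}_k};\mathcal{W})$,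 where $\mathrm{proj}(\mathbf{v};\mathcal{W})=\arg\min_{\mathbf{w}\in\mathcal{W}}\lvert\mathbf{v}-\mathbf{w}\rvert^2$ (Euclidean). Its total code length is $\ell(x^n,\textsc{mix-ogd}(\mathbf{w}_1,\alpha,x^n,\mathbf{P}^n)):=\sum_{k=1}^n\ell(x_k,\textsc{mix}(\mathbf{w}_k,\mathbf{P}_k))$. *)

(* Defs.v *)
From Stdlib Require Import Reals.
From Coquelicot Require Import Coquelicot.
Open Scope R_scope.

(* Conventions: letters of X = {1,..,N} are encoded as 0..N-1;
   models i = 1..m are encoded as 0..m-1;
   time steps k = 1..n are kept as 1..n.
   A distribution on X is p : nat -> R (only values at 0..N-1 matter).
   A probability matrix is P : nat -> nat -> R, P i y = p_i(y).
   A weight vector is w : nat -> R, coordinates 0..m-1 (others forced 0 in S). *)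

Fixpoint sumN (n : nat) (f : nat -> R) : R :=
  match n with O => 0 | S n' => sumN n' f + f n' end.

Fixpoint prodN (n : nat) (f : nat -> R) : R :=
  match n with O => 1 | S n' => prodN n' f * f n' end.

(* minN n f = min (f 0, ..., f n) *)
Fixpoint minN (n : nat) (f : nat -> R) : R :=
  match n with O => f O | S n' => Rmin (minN n' f) (f n) end.

Definition log2 (x : R) : R := ln x / ln 2.

Definition codelen (x : nat) (p : nat -> R) : R := - log2 (p x).

Definition in_Peps (N : nat) (eps : R) (p : nat -> R) : Prop :=
  (forall y, (y < N)%nat -> eps <= p y) /\ sumN N p = 1.

Definition prob_matrix (N m : nat) (eps : R) (P : nat -> nat -> R) : Prop :=
  forall i, (i < m)%nat -> in_Peps N eps (P i).

Definition simplex (m : nat) (w : nat -> R) : Prop :=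
  (forall i, (m <= i)%nat -> w i = 0) /\
  (forall i, (i < m)%nat -> 0 <= w i) /\ sumN m w = 1.

Definition dist2 (m : nat) (v w : nat -> R) : R :=
  sumN m (fun i => (v i - w i) ^ 2).

Definition is_simplex_proj (m : nat) (proj : (nat -> R) -> (nat -> R)) : Prop :=
  forall v, simplex m (proj v) /\
    (forall w, simplex m w -> dist2 m v (proj v) <= dist2 m v w).

Definition lin (m : nat) (w : nat -> R) (P : nat -> nat -> R) (y : nat) : R :=
  sumN m (fun i => w i * P i y).

Definition geo (N m : nat) (w : nat -> R) (P : nat -> nat -> R) (y : nat) : R :=
  prodN m (fun i => Rpower (P i y) (w i)) /
  sumN N (fun z => prodN m (fun i => Rpower (P i z) (w i))).

Definition mixture := (nat -> R) -> (nat -> nat -> R) -> nat -> R.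

Definition shift (w : nat -> R) (i : nat) (t : R) : nat -> R :=
  fun j => if Nat.eqb j i then w j + t else w j.

Definition is_grad (N m : nat) (eps : R) (mix : mixture)
  (G : (nat -> R) -> (nat -> nat -> R) -> nat -> nat -> R) : Prop :=
  forall w P x i, simplex m w -> prob_matrix N m eps P -> (x < N)%nat -> (i < m)%nat ->
    is_derive (fun t : R => codelen x (mix (shift w i t) P)) 0 (G w P x i).

(* Weights of MIX-OGD: ogd_w ... d = w_{d+1}; the sequence x and matrices P
   are indexed by time 1..n. *)
Fixpoint ogd_w (mix : mixture)
  (G : (nat -> R) -> (nat -> nat -> R) -> nat -> nat -> R)
  (proj : (nat -> R) -> (nat -> R)) (w1 : nat -> R) (alpha : R)
  (x : nat -> nat) (P : nat -> nat -> nat -> R) (d : nat) : nat -> R :=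
  match d with
  | O => w1
  | S d' => let w := ogd_w mix G proj w1 alpha x P d' in
            proj (fun i => w i - alpha * G w (P d) (x d) i)
  end.

Definition ogd_len (mix : mixture)
  (G : (nat -> R) -> (nat -> nat -> R) -> nat -> nat -> R)
  (proj : (nat -> R) -> (nat -> R)) (w1 : nat -> R) (alpha : R)
  (x : nat -> nat) (P : nat -> nat -> nat -> R) (n : nat) : R :=
  sumN n (fun d => codelen (x (S d)) (mix (ogd_w mix G proj w1 alpha x P d) (P (S d)))).

Definition lstar (m : nat) (x : nat -> nat) (P : nat -> nat -> nat -> R) (k l : nat) : R :=
  minN (m - 1) (fun i => sumN (S l - k) (fun d => codelen (x (k + d)%nat) (P (k + d)%nat i))).

Definition segmentation (n s : nat) (t : nat -> nat) : Prop :=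
  (1 <= s <= n)%nat /\ t 1%nat = 1%nat /\ t (S s) = S n /\
  (forall i, (1 <= i <= s)%nat -> (t i < t (S i))%nat).

Definition seg_best (m : nat) (x : nat -> nat) (P : nat -> nat -> nat -> R)
  (s : nat) (t : nat -> nat) : R :=
  sumN s (fun d => lstar m x P (t (S d)) (t (S (S d)) - 1)).

(* Main.v *)
Require Import Defs.
From Stdlib Require Import Reals.
From Coquelicot Require Import Coquelicot.
From Stdlib Require Import Lra Lia Factorial FunctionalExtensionality.
Open Scope R_scope.

Lemma sumN_ext n f g : (forall i, (i < n)%nat -> f i = g i) -> sumN n f = sumN n g.
Proof. induction n; simpl; intros H; auto. rewrite IHn, H; auto; intros; apply H; lia. Qed.

Lemma sumN_le n f g : (forall i, (i < n)%nat -> f i <= g i) -> sumN n f <= sumN n g.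
Proof. induction n; simpl; intros H. lra. assert (f n <= g n) by (apply H; lia).
  assert (sumN n f <= sumN n g) by (apply IHn; intros; apply H; lia). lra. Qed.

Lemma sumN_plus n f g : sumN n (fun i => f i + g i) = sumN n f + sumN n g.
Proof. induction n; simpl. lra. rewrite IHn. lra. Qed.

Lemma sumN_minus n f g : sumN n (fun i => f i - g i) = sumN n f - sumN n g.
Proof. induction n; simpl. lra. rewrite IHn. lra. Qed.

Lemma sumN_scal n c f : sumN n (fun i => c * f i) = c * sumN n f.
Proof. induction n; simpl. lra. rewrite IHn. lra. Qed.

Lemma sumN_const n c : sumN n (fun _ => c) = INR n * c.
Proof. induction n; simpl sumN. simpl; lra. rewrite IHn, S_INR. lra. Qed.

Lemma sumN_add a b f : sumN (a + b) f = sumN a f + sumN b (fun e => f (a + e)%nat).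
Proof. induction b; simpl. rewrite Nat.add_0_r; lra. rewrite Nat.add_succ_r. simpl. rewrite IHb. lra. Qed.

Lemma sumN_zero n : sumN n (fun _ => 0) = 0.
Proof. induction n; simpl; lra. Qed.

Lemma sumN_nonneg n f : (forall i, (i < n)%nat -> 0 <= f i) -> 0 <= sumN n f.
Proof. intros H. rewrite <- (Rmult_0_r (INR n)), <- sumN_const. apply sumN_le. auto. Qed.

Lemma sumN_swap n k (f : nat -> nat -> R) :
  sumN n (fun i => sumN k (fun j => f i j)) = sumN k (fun j => sumN n (fun i => f i j)).
Proof. induction n; simpl. rewrite sumN_zero. reflexivity.
  rewrite IHn, <- sumN_plus. reflexivity. Qed.

Lemma sumN_ind n j a f : (j < n)%nat ->
  sumN n (fun i => (if Nat.eqb i j then a else 0) * f i) = a * f j.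
Proof. induction n; intros H. lia. simpl. destruct (Nat.eqb n j) eqn:E.
  - apply Nat.eqb_eq in E. subst. rewrite sumN_ext with (g := fun _ => 0).
    rewrite sumN_zero. lra.
    intros i Hi. destruct (Nat.eqb i j) eqn:E2. apply Nat.eqb_eq in E2; lia. lra.
  - apply Nat.eqb_neq in E. rewrite IHn by lia. lra. Qed.

Lemma sumN_ge_term n f j : (forall i, (i < n)%nat -> 0 <= f i) -> (j < n)%nat -> f j <= sumN n f.
Proof. intros H Hj. rewrite <- (Rmult_1_l (f j)), <- (sumN_ind n j 1 f Hj).
  apply sumN_le. intros i Hi. destruct (Nat.eqb i j); specialize (H i Hi); lra. Qed.

Lemma sumN_ge_two n f a b : (forall i, (i < n)%nat -> 0 <= f i) -> (a < n)%nat -> (b < n)%nat -> a <> b ->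
  f a + f b <= sumN n f.
Proof. intros H Ha Hb Hab.
  rewrite <- (Rmult_1_l (f a)), <- (sumN_ind n a 1 f Ha).
  rewrite <- (Rmult_1_l (f b)), <- (sumN_ind n b 1 f Hb).
  rewrite <- sumN_plus. apply sumN_le. intros i Hi.
  destruct (Nat.eqb i a) eqn:E1; destruct (Nat.eqb i b) eqn:E2;
  try (apply Nat.eqb_eq in E1; apply Nat.eqb_eq in E2; lia); specialize (H i Hi); lra. Qed.

Lemma minN_bound k F A C : (forall j, (j <= k)%nat -> A <= F j + C) -> A <= minN k F + C.
Proof. induction k; simpl; intros H. apply H; lia.
  apply Rmin_case. apply IHk; intros; apply H; lia. apply H; lia. Qed.


Lemma proj_nonexp m proj v u : is_simplex_proj m proj -> simplex m u ->
  dist2 m (proj v) u <= dist2 m v u.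
Proof.
  intros Hp Hu. destruct (Hp v) as [Hs Hmin]. set (p := proj v) in *.
  set (X := sumN m (fun i => (v i - p i) * (u i - p i))).
  set (Dup := sumN m (fun i => (u i - p i) ^ 2)).
  set (Dvp := dist2 m v p).
  assert (HD : forall t, dist2 m v (fun i => p i + t * (u i - p i)) = Dvp - 2 * t * X + t ^ 2 * Dup).
  { intro t. unfold dist2, Dvp, X, Dup, dist2.
    rewrite <- sumN_scal, <- sumN_scal, <- sumN_minus, <- sumN_plus.
    apply sumN_ext. intros; ring. }
  assert (Hw : forall t, 0 <= t <= 1 -> simplex m (fun i => p i + t * (u i - p i))).
  { intros t Ht. destruct Hs as [Hs1 [Hs2 Hs3]]. destruct Hu as [Hu1 [Hu2 Hu3]].
    split; [|split].
    - intros i Hi. rewrite Hs1, Hu1 by auto. ring.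
    - intros i Hi. specialize (Hs2 i Hi). specialize (Hu2 i Hi). nra.
    - rewrite sumN_plus, sumN_scal, sumN_minus, Hs3, Hu3. ring. }
  assert (Hle : forall t, 0 < t <= 1 -> 2 * X <= t * Dup).
  { intros t Ht. pose proof (Hmin _ (Hw t ltac:(lra))). rewrite HD in H. fold Dvp in H.
    assert (2 * t * X <= t * (t * Dup)) by nra.
    apply Rmult_le_reg_l with t; lra. }
  assert (HDup : 0 <= Dup) by (apply sumN_nonneg; intros; apply pow2_ge_0).
  assert (HX : X <= 0).
  { destruct (Rle_dec X 0) as [|Hn]; auto. exfalso.
    assert (Hx : 0 < X) by lra.
    pose proof (Hle (X / (X + Dup)) ltac:(split; [apply Rdiv_lt_0_compat; lra|
      apply Rmult_le_reg_r with (X + Dup); [lra|]; unfold Rdiv; rewrite Rmult_assoc, Rinv_l; lra])).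
    assert (X / (X + Dup) * Dup <= X).
    { apply Rmult_le_reg_r with (X + Dup); [lra|]. unfold Rdiv.
      replace (X * / (X + Dup) * Dup * (X + Dup)) with (X * Dup * ((X + Dup) * / (X + Dup))) by ring.
      rewrite Rinv_r by lra. nra. }
    lra. }
  assert (dist2 m v u = Dvp + Dup - 2 * X).
  { unfold Dvp, Dup, X, dist2. rewrite <- sumN_scal, <- sumN_plus, <- sumN_minus.
    apply sumN_ext. intros; ring. }
  assert (dist2 m p u = Dup) by (unfold dist2, Dup; apply sumN_ext; intros; ring).
  assert (0 <= Dvp) by (apply sumN_nonneg; intros; apply pow2_ge_0).
  lra.
Qed.

Lemma simplex_le1 m w i : simplex m w -> 0 <= w i <= 1.
Proof. intros [H1 [H2 H3]]. destruct (Nat.lt_ge_cases i m).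
  split. auto. rewrite <- H3. apply sumN_ge_term; auto.
  rewrite H1 by auto. lra. Qed.

Lemma simplex_dist2 m w u : simplex m w -> simplex m u -> dist2 m w u <= 2.
Proof. intros Hw Hu. unfold dist2.
  apply Rle_trans with (sumN m (fun i => w i + u i)).
  apply sumN_le. intros i Hi. pose proof (simplex_le1 m w i Hw). pose proof (simplex_le1 m u i Hu). nra.
  rewrite sumN_plus. destruct Hw as [_ [_ ->]]. destruct Hu as [_ [_ ->]]. lra. Qed.

Definition ej (j : nat) : nat -> R := fun i => if Nat.eqb i j then 1 else 0.

Lemma ej_simplex m j : (j < m)%nat -> simplex m (ej j).
Proof. intros Hj. unfold ej. split; [|split].
  - intros i Hi. destruct (Nat.eqb i j) eqn:E; auto. apply Nat.eqb_eq in E; lia.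
  - intros i _. destruct (Nat.eqb i j); lra.
  - rewrite (sumN_ext _ _ (fun i => (if Nat.eqb i j then 1 else 0) * 1)). rewrite sumN_ind; auto. ring.
    intros; ring. Qed.


Definition nrm2 m (g : nat -> R) := sumN m (fun i => g i ^ 2).

Lemma nrm2_nonneg m g : 0 <= nrm2 m g.
Proof. apply sumN_nonneg; intros; apply pow2_ge_0. Qed.

Lemma seg_mono n s t : segmentation n s t -> forall j i, (1 <= i)%nat -> (i <= j)%nat -> (j <= S s)%nat -> (t i <= t j)%nat.
Proof. intros [Hs [H1 [H2 H3]]] j. induction j; intros i Hi Hij Hj. lia.
  destruct (Nat.eq_dec i (S j)). subst; lia.
  assert (t i <= t j)%nat by (apply IHj; lia). assert (t j < t (S j))%nat by (apply H3; lia). lia. Qed.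

Lemma seg_split n s t h : segmentation n s t ->
  sumN n h = sumN s (fun i => sumN (t (S (S i)) - t (S i)) (fun e => h (t (S i) - 1 + e)%nat)).
Proof.
  intros Hseg. pose proof (seg_mono n s t Hseg) as Hmo. destruct Hseg as [Hs [H1 [H2 H3]]].
  assert (forall j, (j <= s)%nat -> sumN (t (S j) - 1) h =
     sumN j (fun i => sumN (t (S (S i)) - t (S i)) (fun e => h (t (S i) - 1 + e)%nat))).
  { induction j; intros Hj. simpl. rewrite H1. reflexivity.
    simpl. rewrite <- IHj by lia.
    assert (t (S j) < t (S (S j)))%nat by (apply H3; lia).
    assert (1 <= t (S j))%nat by (rewrite <- H1; apply Hmo; lia).
    replace (t (S (S j)) - 1)%nat with ((t (S j) - 1) + (t (S (S j)) - t (S j)))%nat by lia.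
    apply sumN_add. }
  rewrite <- H by lia. rewrite H2. f_equal. lia.
Qed.

Section OGD.
Variables (N m n : nat) (mix : mixture)
  (G : (nat -> R) -> (nat -> nat -> R) -> nat -> nat -> R)
  (proj : (nat -> R) -> (nat -> R)) (w1 : nat -> R) (alpha : R)
  (x : nat -> nat) (P : nat -> nat -> nat -> R).
Hypothesis Hproj : is_simplex_proj m proj.
Hypothesis Hw1 : simplex m w1.
Hypothesis Halpha : 0 < alpha.
Let W d := ogd_w mix G proj w1 alpha x P d.
Let g d := G (W d) (P (S d)) (x (S d)).
Let f d v := codelen (x (S d)) (mix v (P (S d))).
Hypothesis Hconv : forall d w u, (d < n)%nat -> simplex m w -> simplex m u ->
  f d w + sumN m (fun i => G w (P (S d)) (x (S d)) i * (u i - w i)) <= f d u.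
Hypothesis Hbest : forall d j, (d < n)%nat -> (j < m)%nat ->
  f d (ej j) = codelen (x (S d)) (P (S d) j).
Hypothesis Hm : (1 <= m)%nat.

Lemma W_simplex d : simplex m (W d).
Proof. destruct d; simpl. exact Hw1. apply Hproj. Qed.

Lemma ogd_step d u : (d < n)%nat -> simplex m u ->
  f d (W d) - f d u <= (dist2 m (W d) u - dist2 m (W (S d)) u) / (2 * alpha) + alpha / 2 * nrm2 m (g d).
Proof.
  intros Hd Hu. pose proof (Hconv d (W d) u Hd (W_simplex d) Hu) as Hc. fold (g d) in Hc.
  assert (Hp : dist2 m (W (S d)) u <= dist2 m (fun i => W d i - alpha * g d i) u).
  { unfold W at 1. simpl. apply proj_nonexp; auto. }
  assert (Hexp : dist2 m (fun i => W d i - alpha * g d i) u =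
     dist2 m (W d) u + 2 * alpha * sumN m (fun i => g d i * (u i - W d i)) + alpha ^ 2 * nrm2 m (g d)).
  { unfold dist2, nrm2. rewrite <- !sumN_scal, <- !sumN_plus. apply sumN_ext; intros; ring. }
  set (S1 := sumN m (fun i => g d i * (u i - W d i))) in *.
  apply Rmult_le_reg_l with (2 * alpha). lra.
  unfold Rdiv. rewrite Rmult_plus_distr_l.
  replace (2 * alpha * ((dist2 m (W d) u - dist2 m (W (S d)) u) * / (2 * alpha)))
    with (dist2 m (W d) u - dist2 m (W (S d)) u) by (field; lra).
  replace (2 * alpha * (alpha * / 2 * nrm2 m (g d))) with (alpha ^ 2 * nrm2 m (g d)) by (field; lra).
  nra.
Qed.

Lemma ogd_tele a len u : (a + len <= n)%nat -> simplex m u ->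
  sumN len (fun e => f (a + e)%nat (W (a + e)%nat) - f (a + e)%nat u) <=
  (dist2 m (W a) u - dist2 m (W (a + len)%nat) u) / (2 * alpha) +
  alpha / 2 * sumN len (fun e => nrm2 m (g (a + e)%nat)).
Proof.
  intros Hn Hu. induction len; simpl.
  - rewrite Nat.add_0_r. unfold Rdiv. lra.
  - pose proof (IHlen ltac:(lia)). pose proof (ogd_step (a + len) u ltac:(lia) Hu).
    replace (a + S len)%nat with (S (a + len)) by lia.
    unfold Rdiv in *. lra.
Qed.

Lemma ogd_segment a len : (a + len <= n)%nat -> 
  sumN len (fun e => f (a + e)%nat (W (a + e)%nat)) <=
  minN (m - 1) (fun j => sumN len (fun e => codelen (x (S (a + e))) (P (S (a + e)) j))) + 
  (1 / alpha + alpha / 2 * sumN len (fun e => nrm2 m (g (a + e)%nat))).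
Proof.
  intros Hn. apply minN_bound. intros j Hj.
  assert (Hjm : (j < m)%nat) by lia.
  pose proof (ogd_tele a len (ej j) Hn (ej_simplex m j Hjm)).
  rewrite sumN_minus in H.
  rewrite (sumN_ext len (fun e => f (a + e)%nat (ej j)) (fun e => codelen (x (S (a + e))) (P (S (a + e)) j))) in H
    by (intros; apply Hbest; lia).
  pose proof (simplex_dist2 m (W a) (ej j) (W_simplex a) (ej_simplex m j Hjm)).
  assert (0 <= dist2 m (W (a + len)) (ej j)) by (apply sumN_nonneg; intros; apply pow2_ge_0).
  assert ((dist2 m (W a) (ej j) - dist2 m (W (a + len)) (ej j)) / (2 * alpha) <= 1 / alpha).
  { unfold Rdiv. apply Rmult_le_reg_l with (2 * alpha). lra.
    replace (2 * alpha * ((dist2 m (W a) (ej j) - dist2 m (W (a + len)) (ej j)) * / (2 * alpha)))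
      with (dist2 m (W a) (ej j) - dist2 m (W (a + len)) (ej j)) by (field; lra).
    replace (2 * alpha * (1 * / alpha)) with 2 by (field; lra). lra. }
  lra.
Qed.

Theorem ogd_generic s t : segmentation n s t ->
  ogd_len mix G proj w1 alpha x P n <= seg_best m x P s t + INR s / alpha +
    alpha / 2 * sumN n (fun d => nrm2 m (g d)).
Proof.
  intros Hseg. pose proof (seg_mono n s t Hseg) as Hmo.
  change (ogd_len mix G proj w1 alpha x P n) with (sumN n (fun d => f d (W d))).
  rewrite (seg_split n s t _ Hseg), (seg_split n s t (fun d => nrm2 m (g d)) Hseg).
  unfold seg_best. rewrite <- sumN_scal.
  replace (INR s / alpha) with (sumN s (fun _ => 1 / alpha)) by (rewrite sumN_const; unfold Rdiv; ring).
  rewrite Rplus_assoc, <- sumN_plus, <- sumN_plus.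
  apply sumN_le. intros i Hi. destruct Hseg as [Hs [H1 [H2 H3]]].
  assert (t (S i) < t (S (S i)))%nat by (apply H3; lia).
  assert (1 <= t (S i))%nat by (rewrite <- H1; apply Hmo; lia).
  assert (t (S (S i)) <= S n)%nat by (rewrite <- H2; apply Hmo; lia).
  pose proof (ogd_segment (t (S i) - 1) (t (S (S i)) - t (S i)) ltac:(lia)).
  unfold lstar.
  replace (S (t (S (S i)) - 1) - t (S i))%nat with (t (S (S i)) - t (S i))%nat by lia.
  replace (fun j => sumN (t (S (S i)) - t (S i)) (fun d => codelen (x (t (S i) + d)%nat) (P (t (S i) + d)%nat j)))
   with (fun j => sumN (t (S (S i)) - t (S i)) (fun e => codelen (x (S (t (S i) - 1 + e))) (P (S (t (S i) - 1 + e)) j))).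
  exact H5.
  apply functional_extensionality. intro j. apply sumN_ext. intros e _.
  replace (S (t (S i) - 1 + e)) with (t (S i) + e)%nat by lia. reflexivity.
Qed.

End OGD.


Lemma exp_alt_bounds (a : R) (k : nat) : 0 <= a <= 1 ->
  sum_f_R0 (tg_alt (fun i => a ^ i / INR (fact i))) (S (2 * k)) <= exp (- a) <=
  sum_f_R0 (tg_alt (fun i => a ^ i / INR (fact i))) (2 * k).
Proof.
  intros Ha.
  unfold exp; destruct (exist_exp (- a)) as [l e]; simpl.
  apply alternated_series_ineq.
  - intro n. unfold Rdiv.
    rewrite fact_simpl, mult_INR, Rinv_mult, <- tech_pow_Rmult.
    assert (0 < INR (fact n)) by apply INR_fact_lt_0.
    assert (0 <= a ^ n) by (apply pow_le; lra).
    assert (1 <= INR (S n)) by (rewrite S_INR; pose proof (pos_INR n); lra).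
    assert (0 < / INR (S n) <= 1).
    { split. apply Rinv_0_lt_compat; lra.
      rewrite <- Rinv_1. apply Rinv_le_contravar; lra. }
    assert (0 < / INR (fact n)) by (apply Rinv_0_lt_compat; lra).
    replace (a * a ^ n * (/ INR (S n) * / INR (fact n))) with
      ((a * / INR (S n)) * (a ^ n * / INR (fact n))) by ring.
    rewrite <- (Rmult_1_l (a ^ n * / INR (fact n))) at 2.
    apply Rmult_le_compat_r. apply Rmult_le_pos; lra.
    replace 1 with (1 * 1) by ring. apply Rmult_le_compat; lra.
  - apply cv_speed_pow_fact.
  - unfold exp_in, infinite_sum in e. intros eps Heps.
    destruct (e eps Heps) as [N0 HN0]. exists N0. intros n Hn.
    replace (sum_f_R0 (tg_alt (fun i : nat => a ^ i / INR (fact i))) n) with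
      (sum_f_R0 (fun i : nat => / INR (fact i) * (- a) ^ i) n). apply HN0; auto.
    apply sum_eq. intros i _. unfold tg_alt.
    replace (- a) with ((-1) * a) by ring. rewrite Rpow_mult_distr. unfold Rdiv. ring.
Qed.

Lemma ln2_gt : 0.69 < ln 2.
Proof.
  set (a := 0.69).
  destruct (exp_alt_bounds a 2) as [H _]. unfold a; lra.
  simpl in H. unfold tg_alt in H. simpl in H.
  assert (0.5 < exp (- a)) by (eapply Rlt_le_trans; [|exact H]; unfold a; field_simplify; lra).
  assert (ln 0.5 < - a). { rewrite <- (ln_exp (- a)). apply ln_increasing; lra. }
  replace 0.5 with (/ 2) in H1 by lra. rewrite ln_Rinv in H1 by lra. lra.
Qed.

Lemma ln2_lt : ln 2 < 0.7.
Proof.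
  set (a := 0.7).
  destruct (exp_alt_bounds a 2) as [_ H]. unfold a; lra.
  simpl in H. unfold tg_alt in H. simpl in H.
  assert (exp (- a) < 0.5) by (eapply Rle_lt_trans; [exact H|]; unfold a; field_simplify; lra).
  assert (- a < ln 0.5). { rewrite <- (ln_exp (- a)). apply ln_increasing. apply exp_pos. lra. }
  replace 0.5 with (/ 2) in H1 by lra. rewrite ln_Rinv in H1 by lra. lra.
Qed.


Lemma pm_bounds N m eps P i y : (1 < N)%nat -> 0 < eps -> prob_matrix N m eps P -> (i < m)%nat -> (y < N)%nat ->
  eps <= P i y <= 1 - eps.
Proof.
  intros HN He HP Hi Hy. destruct (HP i Hi) as [H1 H2]. split. auto.
  set (y' := if Nat.eqb y 0 then 1%nat else 0%nat).
  assert (y' < N /\ y' <> y)%nat as [Hy1 Hy2].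
  { unfold y'. destruct (Nat.eqb y 0) eqn:E; [apply Nat.eqb_eq in E|apply Nat.eqb_neq in E]; lia. }
  pose proof (sumN_ge_two N (P i) y y' ltac:(intros z Hz; specialize (H1 z Hz); lra) Hy Hy1 ltac:(auto)).
  specialize (H1 y' Hy1). lra.
Qed.

Lemma ln_le_sub1 z : 0 < z -> ln z <= z - 1.
Proof. intros Hz. pose proof (exp_ineq1_le (ln z)). rewrite exp_ln in H by auto. lra. Qed.

Lemma ln2_pos : 0 < ln 2.
Proof. pose proof ln2_gt. lra. Qed.

Lemma lin_shift m w P y i t : (i < m)%nat -> lin m (shift w i t) P y = lin m w P y + t * P i y.
Proof.
  intros Hi. unfold lin, shift.
  rewrite <- (sumN_ind m i t (fun j => P j y)) by auto. rewrite <- sumN_plus.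
  apply sumN_ext. intros j _. destruct (Nat.eqb j i); ring.
Qed.

Lemma lin_range N m eps P w y : (1 < N)%nat -> 0 < eps -> prob_matrix N m eps P -> simplex m w -> (y < N)%nat ->
  eps <= lin m w P y <= 1 - eps.
Proof.
  intros HN He HP Hw Hy. destruct Hw as [Hw1 [Hw2 Hw3]]. unfold lin. split.
  - apply Rle_trans with (sumN m (fun i => w i * eps)). rewrite (sumN_ext m _ (fun i => eps * w i)), sumN_scal, Hw3 by (intros; ring). lra.
    apply sumN_le. intros i Hi. pose proof (pm_bounds N m eps P i y HN He HP Hi Hy). specialize (Hw2 i Hi). nra.
  - apply Rle_trans with (sumN m (fun i => w i * (1 - eps))). 
    apply sumN_le. intros i Hi. pose proof (pm_bounds N m eps P i y HN He HP Hi Hy). specialize (Hw2 i Hi). nra.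
    rewrite (sumN_ext m _ (fun i => (1 - eps) * w i)), sumN_scal, Hw3 by (intros; ring). lra.
Qed.

Lemma lin_grad N m eps G P w y i : (1 < N)%nat -> 0 < eps -> is_grad N m eps (lin m) G ->
  prob_matrix N m eps P -> simplex m w -> (y < N)%nat -> (i < m)%nat ->
  G w P y i = - P i y / (lin m w P y * ln 2).
Proof.
  intros HN He HG HP Hw Hy Hi. pose proof (HG w P y i Hw HP Hy Hi) as H1.
  pose proof (lin_range N m eps P w y HN He HP Hw Hy) as Hq.
  set (q := lin m w P y) in *. set (a := P i y).
  assert (H2 : is_derive (fun t => codelen y (lin m (shift w i t) P)) 0 (- a / (q * ln 2))).
  { apply is_derive_ext with (fun t => - (ln (q + t * a) / ln 2)).
    { intro t. unfold codelen, log2. rewrite lin_shift by auto. reflexivity. }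
    pose proof ln2_pos. auto_derive. lra. field. split; lra. }
  rewrite <- (is_derive_unique _ _ _ H1). apply is_derive_unique. exact H2.
Qed.

Lemma lin_conv N m eps G P w u y : (1 < N)%nat -> 0 < eps -> is_grad N m eps (lin m) G ->
  prob_matrix N m eps P -> simplex m w -> simplex m u -> (y < N)%nat ->
  codelen y (lin m w P) + sumN m (fun i => G w P y i * (u i - w i)) <= codelen y (lin m u P).
Proof.
  intros HN He HG HP Hw Hu Hy.
  pose proof (lin_range N m eps P w y HN He HP Hw Hy) as Hq.
  pose proof (lin_range N m eps P u y HN He HP Hu Hy) as Hq'.
  rewrite (sumN_ext m _ (fun i => (- / (lin m w P y * ln 2)) * (u i * P i y - w i * P i y))).
  2: { intros i Hi. rewrite (lin_grad N m eps G P w y i) by auto. field. pose proof ln2_pos. split; lra. }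
  rewrite sumN_scal, sumN_minus. fold (lin m u P y) (lin m w P y).
  unfold codelen, log2. set (q := lin m w P y) in *. set (r := lin m u P y) in *.
  pose proof ln2_pos. pose proof (ln_le_sub1 (r / q) ltac:(apply Rdiv_lt_0_compat; lra)).
  rewrite ln_div in H0 by lra.
  assert (r / q - 1 = (r - q) / q) by (field; lra).
  apply Rmult_le_reg_l with (ln 2). auto.
  replace (ln 2 * (- (ln q / ln 2) + - / (q * ln 2) * (r - q))) with (- ln q - (r - q) / q) by (field; lra).
  replace (ln 2 * - (ln r / ln 2)) with (- ln r) by (field; lra). lra.
Qed.

Lemma lin_best m P j y : (j < m)%nat -> lin m (ej j) P y = P j y.
Proof. intros Hj. unfold lin, ej. rewrite sumN_ind by auto. ring. Qed.

Lemma lin_nrm2 N m eps G P w y : (1 < N)%nat -> 0 < eps -> is_grad N m eps (lin m) G ->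
  prob_matrix N m eps P -> simplex m w -> (y < N)%nat ->
  nrm2 m (G w P y) <= INR m * ((1 - eps) / (lin m w P y * ln 2)) ^ 2.
Proof.
  intros HN He HG HP Hw Hy. unfold nrm2. rewrite <- sumN_const. apply sumN_le. intros i Hi.
  rewrite (lin_grad N m eps G P w y i) by auto.
  pose proof (lin_range N m eps P w y HN He HP Hw Hy). pose proof (pm_bounds N m eps P i y HN He HP Hi Hy).
  pose proof ln2_pos.
  unfold Rdiv. rewrite <- Rsqr_pow2, <- Rsqr_pow2. apply Rsqr_le_abs_1.
  rewrite Rabs_mult, Rabs_Ropp, Rabs_mult, !Rabs_right; try lra.
  apply Rmult_le_compat_r. left; apply Rinv_0_lt_compat; nra. lra.
  left; apply Rinv_0_lt_compat; nra.
Qed.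


Definition cc m (P : nat -> nat -> R) (w : nat -> R) y := sumN m (fun i => w i * ln (P i y)).
Definition ZZ N m P w := sumN N (fun z => exp (cc m P w z)).

Lemma geo_prod m P w y : prodN m (fun i => Rpower (P i y) (w i)) = exp (cc m P w y).
Proof. unfold cc. induction m; simpl. rewrite exp_0; auto.
  rewrite IHm, exp_plus. reflexivity. Qed.

Lemma geo_eq N m w P y : geo N m w P y = exp (cc m P w y) / ZZ N m P w.
Proof. unfold geo, ZZ. rewrite geo_prod. f_equal. apply sumN_ext. intros; apply geo_prod. Qed.

Lemma sumN_pos n f : (0 < n)%nat -> (forall i, (i < n)%nat -> 0 < f i) -> 0 < sumN n f.
Proof. intros Hn H. destruct n. lia. simpl. pose proof (H n ltac:(lia)).
  assert (0 <= sumN n f) by (apply sumN_nonneg; intros; left; apply H; lia). lra. Qed.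

Lemma ZZ_pos N m P w : (0 < N)%nat -> 0 < ZZ N m P w.
Proof. intros. apply sumN_pos; auto. intros; apply exp_pos. Qed.

Lemma codelen_geo N m w P y : (0 < N)%nat ->
  codelen y (geo N m w P) = - (cc m P w y - ln (ZZ N m P w)) / ln 2.
Proof. intros HN. unfold codelen, log2. rewrite geo_eq, ln_div, ln_exp. unfold Rdiv. ring.
  apply exp_pos. apply ZZ_pos; auto. Qed.

Lemma cc_shift m P w y i t : (i < m)%nat -> cc m P (shift w i t) y = cc m P w y + t * ln (P i y).
Proof. intros Hi. unfold cc, shift.
  rewrite <- (sumN_ind m i t (fun j => ln (P j y))) by auto. rewrite <- sumN_plus.
  apply sumN_ext. intros j _. destruct (Nat.eqb j i); ring. Qed.

Lemma is_derive_sumN K (f : nat -> R -> R) (df : nat -> R) x0 :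
  (forall k, (k < K)%nat -> is_derive (f k) x0 (df k)) ->
  is_derive (fun t => sumN K (fun k => f k t)) x0 (sumN K df).
Proof. induction K; intros H; simpl.
  - unfold is_derive; change (is_derive (fun _ : R => 0) x0 (@zero R_NormedModule)). apply is_derive_const.
  - apply (is_derive_plus (fun t => sumN K (fun k => f k t)) (f K)). apply IHK; intros; apply H; lia. apply H; lia. Qed.

Definition MM N m P w i := sumN N (fun z => ln (P i z) * exp (cc m P w z)) / ZZ N m P w.

Lemma geo_grad N m eps G P w y i : (1 < N)%nat -> 0 < eps -> is_grad N m eps (geo N m) G ->
  prob_matrix N m eps P -> simplex m w -> (y < N)%nat -> (i < m)%nat ->
  G w P y i = - (ln (P i y) - MM N m P w i) / ln 2.
Proof.
  intros HN He HG HP Hw Hy Hi. pose proof (HG w P y i Hw HP Hy Hi) as H1.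
  set (Z := fun t => sumN N (fun z => exp (cc m P w z + t * ln (P i z)))).
  assert (HZ : is_derive Z 0 (sumN N (fun z => ln (P i z) * exp (cc m P w z)))).
  { apply is_derive_sumN. intros k _. auto_derive. auto. rewrite Rmult_0_l, Rplus_0_r. ring. }
  assert (HZ0 : Z 0 = ZZ N m P w).
  { unfold Z, ZZ. apply sumN_ext. intros. rewrite Rmult_0_l, Rplus_0_r. auto. }
  assert (HZp : 0 < Z 0) by (rewrite HZ0; apply ZZ_pos; lia).
  assert (H2 : is_derive (fun t => codelen y (geo N m (shift w i t) P)) 0
                 (- (ln (P i y) - MM N m P w i) / ln 2)).
  { apply is_derive_ext with (fun t => - ((cc m P w y + t * ln (P i y)) - ln (Z t)) / ln 2).
    { intro t. rewrite codelen_geo by lia. rewrite cc_shift by auto. unfold Z, ZZ.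
      f_equal. f_equal. f_equal. f_equal. apply sumN_ext. intros. rewrite cc_shift; auto. }
    pose proof ln2_pos. auto_derive. split. exists (sumN N (fun z => ln (P i z) * exp (cc m P w z))). exact HZ.
    split; auto.
    replace (Derive (fun x : R => Z x) 0) with (sumN N (fun z => ln (P i z) * exp (cc m P w z))) by (symmetry; apply is_derive_unique; exact HZ).
    unfold MM. rewrite <- HZ0. field. split; lra. }
  rewrite <- (is_derive_unique _ _ _ H1). apply is_derive_unique. exact H2.
Qed.


Lemma geo_best N m eps P j y : (1 < N)%nat -> 0 < eps -> prob_matrix N m eps P -> (j < m)%nat ->
  (y < N)%nat -> geo N m (ej j) P y = P j y.
Proof.
  intros HN He HP Hj Hy. rewrite geo_eq.
  assert (Hc : forall z, (z < N)%nat -> exp (cc m P (ej j) z) = P j z).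
  { intros z Hz. unfold cc, ej. rewrite sumN_ind by auto. rewrite Rmult_1_l. apply exp_ln.
    pose proof (pm_bounds N m eps P j z HN He HP Hj Hz). lra. }
  rewrite Hc by auto. unfold ZZ. rewrite (sumN_ext N _ (P j)) by auto.
  destruct (HP j Hj) as [_ ->]. field.
Qed.

Lemma exp_tangent d M : exp M * (1 + d - M) <= exp d.
Proof. pose proof (exp_ineq1_le (d - M)). replace (exp d) with (exp M * exp (d - M)).
  apply Rmult_le_compat_l. left; apply exp_pos. lra. rewrite <- exp_plus. f_equal. ring. Qed.

Lemma geo_conv N m eps G P w u y : (1 < N)%nat -> 0 < eps -> is_grad N m eps (geo N m) G ->
  prob_matrix N m eps P -> simplex m w -> simplex m u -> (y < N)%nat ->
  codelen y (geo N m w P) + sumN m (fun i => G w P y i * (u i - w i)) <= codelen y (geo N m u P).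
Proof.
  intros HN He HG HP Hw Hu Hy.
  set (Zw := ZZ N m P w). set (Zu := ZZ N m P u).
  assert (HZw : 0 < Zw) by (apply ZZ_pos; lia). assert (HZu : 0 < Zu) by (apply ZZ_pos; lia).
  set (d := fun z => cc m P u z - cc m P w z).
  set (S := sumN N (fun z => exp (cc m P w z) * d z)).
  assert (Hd : forall z, d z = sumN m (fun i => (u i - w i) * ln (P i z))).
  { intro z. unfold d, cc. rewrite <- sumN_minus. apply sumN_ext. intros; ring. }
  assert (Hsum : sumN m (fun i => G w P y i * (u i - w i)) = - (d y - S / Zw) / ln 2).
  { rewrite (sumN_ext m _ (fun i => (-/ ln 2) * ((u i - w i) * ln (P i y)) + (/ ln 2 * / Zw) * (sumN N (fun z => (u i - w i) * ln (P i z) * exp (cc m P w z))))).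
    2: { intros i Hi. rewrite (geo_grad N m eps G P w y i) by auto. unfold MM.
         fold Zw.
         rewrite (sumN_ext N (fun z => (u i - w i) * ln (P i z) * exp (cc m P w z)) (fun z => (u i - w i) * (ln (P i z) * exp (cc m P w z)))) by (intros; ring).
         rewrite sumN_scal. field. pose proof ln2_pos. split; lra. }
    rewrite sumN_plus, sumN_scal, sumN_scal, sumN_swap, <- Hd.
    unfold S. rewrite (sumN_ext N (fun j => sumN m (fun i => (u i - w i) * ln (P i j) * exp (cc m P w j)))
       (fun z => exp (cc m P w z) * d z)).
    2: { intros z Hz. rewrite Hd, <- sumN_scal. apply sumN_ext. intros; ring. }
    field. pose proof ln2_pos. split; lra. }
  rewrite Hsum, !codelen_geo by lia. fold Zw Zu.
  set (M := S / Zw).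
  assert (HZ : exp M * Zw <= Zu).
  { unfold Zu, ZZ. apply Rle_trans with (sumN N (fun z => exp (cc m P w z) * (exp M * (1 + d z - M)))).
    - replace (exp M * Zw) with (exp M * (Zw + S - M * Zw)) by (unfold M; field; lra).
      rewrite (sumN_ext N _ (fun z => (exp M * exp (cc m P w z) + exp M * (exp (cc m P w z) * d z)) - (exp M * M) * exp (cc m P w z))) by (intros; ring).
      rewrite sumN_minus, sumN_plus, !sumN_scal. unfold Zw, ZZ, S. right; ring.
    - apply sumN_le. intros z Hz. replace (cc m P u z) with (cc m P w z + d z) by (unfold d; ring).
      rewrite exp_plus. apply Rmult_le_compat_l. left; apply exp_pos. apply exp_tangent. }
  assert (M + ln Zw <= ln Zu).
  { rewrite <- (ln_exp M), <- ln_mult by (try apply exp_pos; auto). apply ln_le; auto.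
    apply Rmult_lt_0_compat; auto. apply exp_pos. }
  replace (cc m P u y) with (cc m P w y + d y) by (unfold d; ring).
  pose proof ln2_pos. unfold Rdiv. apply Rmult_le_reg_l with (ln 2); auto.
  replace (ln 2 * (- (cc m P w y - ln Zw) * / ln 2 + - (d y - M) * / ln 2)) with
    (- (cc m P w y - ln Zw) - (d y - M)) by (field; lra).
  replace (ln 2 * (- (cc m P w y + d y - ln Zu) * / ln 2)) with (- (cc m P w y + d y - ln Zu)) by (field; lra).
  lra.
Qed.

Lemma Rabs_sumN n f : Rabs (sumN n f) <= sumN n (fun i => Rabs (f i)).
Proof. induction n; simpl. rewrite Rabs_R0; lra.
  eapply Rle_trans. apply Rabs_triang. lra. Qed.

Lemma geo_range N m w P y : (0 < N)%nat -> (y < N)%nat -> 0 < geo N m w P y <= 1.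
Proof. intros HN Hy. rewrite geo_eq. pose proof (ZZ_pos N m P w HN). split.
  apply Rdiv_lt_0_compat; auto. apply exp_pos.
  apply Rmult_le_reg_r with (ZZ N m P w); auto. unfold Rdiv. rewrite Rmult_assoc, Rinv_l by lra.
  rewrite Rmult_1_l, Rmult_1_r. unfold ZZ. apply (sumN_ge_term N (fun z => exp (cc m P w z))); auto.
  intros; left; apply exp_pos. Qed.

Lemma geo_nrm2 N m eps G P w y : (1 < N)%nat -> 0 < eps -> is_grad N m eps (geo N m) G ->
  prob_matrix N m eps P -> simplex m w -> (y < N)%nat ->
  nrm2 m (G w P y) <= INR m * ((1 - geo N m w P y) * (- ln eps) / ln 2) ^ 2.
Proof.
  intros HN He HG HP Hw Hy. unfold nrm2. rewrite <- sumN_const. apply sumN_le. intros i Hi.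
  rewrite (geo_grad N m eps G P w y i) by auto.
  set (Zw := ZZ N m P w). assert (HZw : 0 < Zw) by (apply ZZ_pos; lia).
  set (e := fun z => exp (cc m P w z)).
  assert (Ha : forall z, (z < N)%nat -> ln eps <= ln (P i z) <= 0).
  { intros z Hz. pose proof (pm_bounds N m eps P i z HN He HP Hi Hz). split. apply ln_le; lra.
    rewrite <- ln_1. apply ln_le; lra. }
  assert (Hq : geo N m w P y = e y / Zw) by (apply geo_eq).
  assert (Hdiff : ln (P i y) - MM N m P w i = sumN N (fun z => e z * (ln (P i y) - ln (P i z))) / Zw).
  { unfold MM. fold Zw. apply Rmult_eq_reg_r with Zw; [|lra]. unfold Rdiv.
    rewrite Rmult_assoc, Rinv_l, Rmult_1_r by lra. rewrite Rmult_minus_distr_r, Rmult_assoc, Rinv_l, Rmult_1_r by lra.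
    replace (sumN N (fun z => e z * (ln (P i y) - ln (P i z)))) with
      (ln (P i y) * sumN N e - sumN N (fun z => ln (P i z) * exp (cc m P w z))).
    reflexivity. rewrite <- sumN_scal, <- sumN_minus. apply sumN_ext. intros; unfold e; ring. }
  assert (Hb : Rabs (sumN N (fun z => e z * (ln (P i y) - ln (P i z)))) <= (Zw - e y) * (- ln eps)).
  { eapply Rle_trans. apply Rabs_sumN.
    replace ((Zw - e y) * - ln eps) with (sumN N (fun z => (e z - (if Nat.eqb z y then e y else 0) * 1) * (- ln eps))).
    2: { rewrite (sumN_ext N _ (fun z => (- ln eps) * (e z - (if Nat.eqb z y then e y else 0) * 1))) by (intros; ring).
         rewrite sumN_scal, sumN_minus, sumN_ind by auto. unfold Zw, ZZ. fold e. ring. }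
    apply sumN_le. intros z Hz. pose proof (Ha z Hz). pose proof (Ha y Hy). 
    assert (0 < e z) by apply exp_pos.
    destruct (Nat.eqb z y) eqn:E.
    - apply Nat.eqb_eq in E. subst. rewrite Rminus_diag, Rmult_0_r, Rabs_R0. lra.
    - rewrite Rmult_0_l, Rminus_0_r, Rabs_mult, Rabs_right by lra. apply Rmult_le_compat_l. lra.
      apply Rabs_le. lra. }
  rewrite Hdiff. rewrite <- Rsqr_pow2, <- Rsqr_pow2. apply Rsqr_le_abs_1. pose proof ln2_pos.
  assert (0 <= - ln eps). { pose proof (Ha 0%nat ltac:(lia)). lra. }
  assert (e y / Zw <= 1) by (rewrite <- Hq; apply (geo_range N m w P y); lia).
  rewrite Hq. unfold Rdiv. rewrite Rabs_mult, Rabs_Ropp, Rabs_mult, (Rabs_right (/ ln 2)), (Rabs_right (/ Zw)).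
  rewrite (Rabs_right ((1 - e y * / Zw) * - ln eps * / ln 2)).
  apply Rmult_le_compat_r. left; apply Rinv_0_lt_compat; auto.
  apply Rmult_le_reg_r with Zw; auto. rewrite Rmult_assoc, Rinv_l, Rmult_1_r by lra.
  replace ((1 - e y * / Zw) * - ln eps * Zw) with ((Zw - e y) * - ln eps) by (field; lra). exact Hb.
  all: try (left; apply Rinv_0_lt_compat; auto).
  apply Rle_ge. apply Rmult_le_pos. apply Rmult_le_pos; auto. unfold Rdiv in H1. lra. left; apply Rinv_0_lt_compat; auto.
Qed.


Lemma phiA a L : 1/2 <= a -> a <= L -> exp (-2 * L) * L <= exp (-2 * a) * a.
Proof.
  intros Ha HL. set (r := L - a).
  replace (exp (-2 * a)) with (exp (-2 * L) * exp (2 * r)) by (rewrite <- exp_plus; f_equal; unfold r; ring).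
  pose proof (exp_ineq1_le (2 * r)). pose proof (exp_pos (-2 * L)).
  rewrite Rmult_assoc. apply Rmult_le_compat_l. lra.
  replace L with (a + r) at 1 by (unfold r; ring).
  assert (0 <= r) by (unfold r; lra).
  assert (0 <= (exp (2 * r) - 1 - 2 * r) * a) by (apply Rmult_le_pos; lra).
  assert (0 <= r * (2 * a - 1)) by (apply Rmult_le_pos; lra). nra.
Qed.

Lemma phiB a b : 0 <= b -> b <= a -> a <= 1/2 -> exp (-2 * b) * b <= exp (-2 * a) * a.
Proof.
  intros Hb Hba Ha. set (t := a - b).
  replace (exp (-2 * b)) with (exp (-2 * a) * exp (2 * t)) by (rewrite <- exp_plus; f_equal; unfold t; ring).
  pose proof (exp_ineq1_le (-2 * t)). pose proof (exp_pos (-2 * a)). pose proof (exp_pos (2 * t)).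
  assert (exp (2 * t) * exp (-2 * t) = 1) by (rewrite <- exp_plus; replace (2 * t + -2 * t) with 0 by ring; apply exp_0).
  assert (exp (2 * t) * (1 - 2 * t) <= 1) by nra.
  pose proof (exp_ineq1_le (2 * t)).
  assert (0 <= t) by (unfold t; lra).
  assert (0 <= (exp (2 * t) - 1) * (1/2 - t - b)) by (apply Rmult_le_pos; unfold t in *; lra).
  assert ((exp (2 * t) - 1) * b <= t) by nra.
  rewrite Rmult_assoc. apply Rmult_le_compat_l. lra.
  replace a with (b + t) by (unfold t; ring). nra.
Qed.

Lemma exp_m2ln q : 0 < q -> exp (-2 * (- ln q)) = q ^ 2.
Proof. intros Hq. replace (-2 * - ln q) with (ln q + ln q) by ring. rewrite exp_plus, exp_ln by auto. ring. Qed.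

Lemma lin_core B q : 1 <= B -> let E := exp (B * ln 2) in let eps := / E in
  eps <= q <= 1 - eps -> 8 * B * (1 - eps) ^ 2 <= 17 * ln 2 * E ^ 2 * (q ^ 2 * - ln q).
Proof.
  intros HB E eps Hq. pose proof ln2_gt. pose proof (exp_pos (B * ln 2)) as HE. fold E in HE.
  assert (HEe : E * eps = 1) by (unfold eps; field; lra).
  assert (Heps : 0 < eps) by (unfold eps; apply Rinv_0_lt_compat; lra).
  assert (Hln : ln eps = - (B * ln 2)) by (unfold eps, E; rewrite ln_Rinv, ln_exp by apply exp_pos; ring).
  assert (HE1 : 1 + B * ln 2 <= E) by apply exp_ineq1_le.
  assert (Hq0 : 0 < q) by lra.
  assert (Hlq : - ln q <= B * ln 2) by (assert (ln eps <= ln q) by (apply ln_le; lra); lra).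
  destruct (Rle_dec (1/2) (- ln q)) as [HA|HB'].
  - pose proof (phiA (- ln q) (B * ln 2) HA Hlq). rewrite exp_m2ln in H0 by auto.
    replace (exp (-2 * (B * ln 2))) with (eps ^ 2) in H0 by (rewrite <- exp_m2ln, Hln by auto; f_equal; ring).
    assert (17 * ln 2 * E ^ 2 * (eps ^ 2 * (B * ln 2)) <= 17 * ln 2 * E ^ 2 * (q ^ 2 * - ln q)).
    { apply Rmult_le_compat_l; auto. apply Rmult_le_pos. lra. apply pow2_ge_0. }
    replace (17 * ln 2 * E ^ 2 * (eps ^ 2 * (B * ln 2))) with (17 * ln 2 * ln 2 * B * (E * eps) ^ 2) in H1 by ring.
    rewrite HEe in H1. assert ((1 - eps) ^ 2 <= 1) by nra.
    assert (8 <= 17 * ln 2 * ln 2) by nra.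
    assert (8 * B * (1 - eps) ^ 2 <= 8 * B * 1) by (apply Rmult_le_compat_l; lra).
    assert (8 * B <= 17 * ln 2 * ln 2 * B) by (apply Rmult_le_compat_r; lra). lra.
  - set (b := 1 - eps). assert (Hb0 : 0 < b) by (unfold b; lra).
    assert (Hlb : 0 <= - ln b) by (assert (Hx : ln b <= ln 1) by (apply ln_le; unfold b; lra); rewrite ln_1 in Hx; lra).
    assert (Hlb2 : - ln b <= - ln q) by (assert (ln q <= ln b) by (apply ln_le; unfold b; lra); lra).
    pose proof (phiB (- ln q) (- ln b) Hlb Hlb2 ltac:(lra)).
    rewrite !exp_m2ln in H0 by auto.
    pose proof (ln_le_sub1 b Hb0). assert (eps <= - ln b) by (unfold b in *; lra).
    assert (b ^ 2 * eps <= q ^ 2 * - ln q) by (apply Rle_trans with (b ^ 2 * - ln b); auto; apply Rmult_le_compat_l; auto; apply pow2_ge_0).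
    assert (17 * ln 2 * E ^ 2 * (b ^ 2 * eps) <= 17 * ln 2 * E ^ 2 * (q ^ 2 * - ln q)).
    { apply Rmult_le_compat_l; auto. apply Rmult_le_pos. lra. apply pow2_ge_0. }
    replace (17 * ln 2 * E ^ 2 * (b ^ 2 * eps)) with (17 * ln 2 * E * b ^ 2 * (E * eps)) in H4 by ring.
    rewrite HEe in H4.
    assert (8 * B <= 17 * ln 2 * E) by nra.
    assert (0 <= b ^ 2) by apply pow2_ge_0. nra.
Qed.


Section Main.
Variables (N m : nat) (HN : (1 < N)%nat) (Hm : (1 < m)%nat)
  (eps : R) (Heps : 0 < eps)
  (n : nat)
  (x : nat -> nat) (Hx : forall j, (1 <= j <= n)%nat -> (x j < N)%nat)
  (P : nat -> nat -> nat -> R)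
  (HP : forall k, (1 <= k <= n)%nat -> prob_matrix N m eps (P k))
  (proj : (nat -> R) -> (nat -> R)) (Hproj : is_simplex_proj m proj)
  (w1 : nat -> R) (Hw1 : simplex m w1).

Lemma lin_ogd Glin (HGlin : is_grad N m eps (lin m) Glin) alpha (Ha : 0 < alpha) s t :
  segmentation n s t ->
  ogd_len (lin m) Glin proj w1 alpha x P n <= seg_best m x P s t + INR s / alpha +
    alpha / 2 * sumN n (fun d => nrm2 m (Glin (ogd_w (lin m) Glin proj w1 alpha x P d) (P (S d)) (x (S d)))).
Proof.
  apply ogd_generic; auto; try lia.
  - intros d w u Hd Hw Hu. apply (lin_conv N m eps); auto. apply HP; lia. apply Hx; lia.
  - intros d j Hd Hj. unfold codelen. rewrite lin_best; auto.
Qed.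

Lemma geo_ogd Ggeo (HGgeo : is_grad N m eps (geo N m) Ggeo) alpha (Ha : 0 < alpha) s t :
  segmentation n s t ->
  ogd_len (geo N m) Ggeo proj w1 alpha x P n <= seg_best m x P s t + INR s / alpha +
    alpha / 2 * sumN n (fun d => nrm2 m (Ggeo (ogd_w (geo N m) Ggeo proj w1 alpha x P d) (P (S d)) (x (S d)))).
Proof.
  apply ogd_generic; auto; try lia.
  - intros d w u Hd Hw Hu. apply (geo_conv N m eps); auto. apply HP; lia. apply Hx; lia.
  - intros d j Hd Hj. unfold codelen. rewrite (geo_best N m eps); auto. apply HP; lia. apply Hx; lia.
Qed.

End Main.

Lemma fin_self L SB s alpha Sg : 0 < alpha -> L <= SB + s / alpha + alpha / 2 * Sg -> Sg <= / alpha * L ->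
  L <= 2 * SB + 2 * s / alpha.
Proof. intros Ha H1 H2. assert (alpha / 2 * Sg <= alpha / 2 * (L / alpha)) by (apply Rmult_le_compat_l; unfold Rdiv; rewrite Rmult_comm; lra).
  replace (alpha / 2 * (L / alpha)) with (L / 2) in H by (field; lra). unfold Rdiv in *. lra. Qed.

Lemma sum_self n (g l : nat -> R) c : (forall d, (d < n)%nat -> g d <= c * l d) -> sumN n g <= c * sumN n l.
Proof. intros H. rewrite <- sumN_scal. apply sumN_le. auto. Qed.

Lemma sum_max n (g : nat -> R) c : (forall d, (d < n)%nat -> g d <= c) -> sumN n g <= INR n * c.
Proof. intros H. rewrite <- sumN_const. apply sumN_le. auto. Qed.


Lemma lin_self_final B m q : 1 <= B -> 0 < m -> let E := exp (B * ln 2) in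
  / E <= q <= 1 - / E ->
  m * ((1 - / E) / (q * ln 2)) ^ 2 <= / (8 * B / (17 * m * E ^ 2)) * - (ln q / ln 2).
Proof.
  intros HB Hm E Hq. pose proof (lin_core B q HB Hq) as H. fold E in H.
  pose proof (exp_pos (B * ln 2)) as HE. fold E in HE. pose proof ln2_pos.
  assert (Hq0 : 0 < q). { assert (0 < / E) by (apply Rinv_0_lt_compat; lra). lra. }
  set (c := m / (8 * B * q ^ 2 * ln 2 ^ 2)).
  assert (Hc : 0 < c). { unfold c. apply Rdiv_lt_0_compat; auto.
    repeat apply Rmult_lt_0_compat; try lra; apply pow_lt; lra. }
  replace (m * ((1 - / E) / (q * ln 2)) ^ 2) with (c * (8 * B * (1 - / E) ^ 2)) by (unfold c; field; repeat split; lra).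
  replace (/ (8 * B / (17 * m * E ^ 2)) * - (ln q / ln 2)) with (c * (17 * ln 2 * E ^ 2 * (q ^ 2 * - ln q)))
    by (unfold c; field; repeat split; lra).
  apply Rmult_le_compat_l; lra.
Qed.

Lemma exp_sq_ge B : 0 <= B -> (B * ln 2) ^ 2 <= exp (B * ln 2) ^ 2.
Proof. intros HB. pose proof (exp_ineq1_le (B * ln 2)). pose proof ln2_pos.
  assert (0 <= B * ln 2) by nra. apply pow_incr. lra. Qed.


Theorem theorem2
  (N m : nat) (HN : (1 < N)%nat) (Hm : (1 < m)%nat)
  (B : R) (HB : 1 <= B)
  (n : nat) (Hn : (1 <= n)%nat)
  (x : nat -> nat) (Hx : forall j, (1 <= j <= n)%nat -> (x j < N)%nat)
  (P : nat -> nat -> nat -> R)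
  (HP : forall k, (1 <= k <= n)%nat -> prob_matrix N m (Rpower 2 (- B)) (P k))
  (proj : (nat -> R) -> (nat -> R)) (Hproj : is_simplex_proj m proj)
  (Glin Ggeo : (nat -> R) -> (nat -> nat -> R) -> nat -> nat -> R)
  (HGlin : is_grad N m (Rpower 2 (- B)) (lin m) Glin)
  (HGgeo : is_grad N m (Rpower 2 (- B)) (geo N m) Ggeo)
  (w1 : nat -> R) (Hw1 : simplex m w1) :
  (forall s t, segmentation n s t ->
     ogd_len (lin m) Glin proj w1 (8 * B / (17 * INR m * Rpower 4 B)) x P n
     <= 2 * seg_best m x P s t + 17 * INR m * INR s * Rpower 4 B / (4 * B)) /\
  (forall s t, segmentation n s t ->
     ogd_len (lin m) Glin proj w1 (8 * B / sqrt (INR n) / (17 * INR m * Rpower 4 B)) x P n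
     <= seg_best m x P s t + 35 * INR m * INR s * Rpower 4 B / (4 * B) * sqrt (INR n)) /\
  (forall s t, segmentation n s t ->
     ogd_len (geo N m) Ggeo proj w1 (10 / (7 * INR m * B ^ 2)) x P n
     <= 2 * seg_best m x P s t + 7 * INR m * INR s * B ^ 2 / 5) /\
  (forall s t, segmentation n s t ->
     ogd_len (geo N m) Ggeo proj w1 (10 / sqrt (INR n) / (7 * INR m * B ^ 2)) x P n
     <= seg_best m x P s t + 19 * INR m * INR s * B ^ 2 / 10 * sqrt (INR n)).
Proof.
  set (E := exp (B * ln 2)).
  pose proof (exp_pos (B * ln 2)) as HE. fold E in HE.
  pose proof ln2_gt as Hl2. pose proof ln2_lt as Hl2'.
  assert (Hepsv : Rpower 2 (- B) = / E) by (unfold Rpower, E; rewrite <- exp_Ropp; f_equal; ring).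
  assert (H4 : Rpower 4 B = E ^ 2).
  { unfold Rpower, E. replace 4 with (2 * 2) by ring. rewrite ln_mult by lra.
    rewrite <- Rsqr_pow2. unfold Rsqr. rewrite <- exp_plus. f_equal; ring. }
  rewrite H4. set (eps := Rpower 2 (- B)) in *.
  assert (Heps : 0 < eps) by (rewrite Hepsv; apply Rinv_0_lt_compat; lra).
  assert (Hleps : - ln eps = B * ln 2) by (rewrite Hepsv; unfold E; rewrite ln_Rinv, ln_exp by apply exp_pos; ring).
  assert (HE1 : 1 + B * ln 2 <= E) by apply exp_ineq1_le.
  assert (Hm0 : 2 <= INR m) by (replace 2 with (INR 2) by (simpl; ring); apply le_INR; lia).
  assert (Hn0 : 1 <= INR n) by (replace 1 with (INR 1) by (simpl; ring); apply le_INR; lia).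
  assert (Hsq : 0 < sqrt (INR n)) by (apply sqrt_lt_R0; lra).
  assert (Hsq2 : sqrt (INR n) * sqrt (INR n) = INR n) by (apply sqrt_sqrt; lra).
  assert (Hs1 : forall s t, segmentation n s t -> 1 <= INR s).
  { intros s t [Hs _]. replace 1 with (INR 1) by (simpl; ring). apply le_INR; lia. }
  assert (HPd : forall d, (d < n)%nat -> prob_matrix N m eps (P (S d))) by (intros; apply HP; lia).
  assert (Hxd : forall d, (d < n)%nat -> (x (S d) < N)%nat) by (intros; apply Hx; lia).
  split; [|split; [|split]].
  -
    intros s t Hseg. set (al := 8 * B / (17 * INR m * E ^ 2)).
    assert (Hal : 0 < al) by (unfold al; apply Rdiv_lt_0_compat; [lra|]; apply Rmult_lt_0_compat; [lra|apply pow_lt; lra]).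
    pose proof (lin_ogd N m HN Hm eps Heps n x Hx P HP proj Hproj w1 Hw1 Glin HGlin al Hal s t Hseg) as H.
    eapply Rle_trans. eapply fin_self. exact Hal. exact H.
    + apply sum_self. intros d Hd.
      set (w := ogd_w (lin m) Glin proj w1 al x P d).
      assert (Hw : simplex m w) by (apply W_simplex; auto).
      eapply Rle_trans. apply (lin_nrm2 N m eps); auto.
      pose proof (lin_range N m eps (P (S d)) w (x (S d)) HN Heps (HPd d Hd) Hw (Hxd d Hd)).
      rewrite Hepsv in *. unfold codelen, log2. apply lin_self_final; auto. lra.
    + pose proof (Hs1 s t Hseg). right. unfold al. field. repeat split; lra.
  -
    intros s t Hseg. set (al := 8 * B / sqrt (INR n) / (17 * INR m * E ^ 2)).
    assert (Hal : 0 < al) by (unfold al; repeat apply Rdiv_lt_0_compat; try lra; apply Rmult_lt_0_compat; [lra|apply pow_lt; lra]).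
    pose proof (lin_ogd N m HN Hm eps Heps n x Hx P HP proj Hproj w1 Hw1 Glin HGlin al Hal s t Hseg) as H.
    assert (Hg : sumN n (fun d => nrm2 m (Glin (ogd_w (lin m) Glin proj w1 al x P d) (P (S d)) (x (S d))))
                 <= INR n * (INR m * (E / ln 2) ^ 2)).
    { apply sum_max. intros d Hd.
      set (w := ogd_w (lin m) Glin proj w1 al x P d).
      assert (Hw : simplex m w) by (apply W_simplex; auto).
      eapply Rle_trans. apply (lin_nrm2 N m eps); auto.
      pose proof (lin_range N m eps (P (S d)) w (x (S d)) HN Heps (HPd d Hd) Hw (Hxd d Hd)).
      set (q := lin m w (P (S d)) (x (S d))) in *.
      apply Rmult_le_compat_l. lra. apply pow_incr. split.
      apply Rdiv_le_0_compat. lra. apply Rmult_lt_0_compat; lra.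
      unfold Rdiv. rewrite Rinv_mult. rewrite <- Rmult_assoc. apply Rmult_le_compat_r.
      left; apply Rinv_0_lt_compat; lra.
      apply Rmult_le_reg_r with q. lra. rewrite Rmult_assoc, Rinv_l, Rmult_1_r by lra.
      rewrite Hepsv in *. 
      assert (E * / E = 1) by (field; lra).
      assert (1 - / E <= 1) by (assert (0 < / E) by (apply Rinv_0_lt_compat; lra); lra).
      nra. }
    pose proof (Hs1 s t Hseg) as Hs.
    assert (al / 2 * sumN n (fun d => nrm2 m (Glin (ogd_w (lin m) Glin proj w1 al x P d) (P (S d)) (x (S d))))
            <= al / 2 * (INR n * (INR m * (E / ln 2) ^ 2))) by (apply Rmult_le_compat_l; lra).
    eapply Rle_trans. exact H.
    assert (Hrhs : al / 2 * (INR n * (INR m * (E / ln 2) ^ 2)) = 4 * B * sqrt (INR n) / (17 * ln 2 ^ 2)).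
    { unfold al. set (r := sqrt (INR n)) in *. rewrite <- Hsq2. field. repeat split; lra. }
    assert (Hsal : INR s / al = 17 * INR m * INR s * E ^ 2 * sqrt (INR n) / (8 * B)).
    { unfold al. field. repeat split; lra. }
    rewrite Hrhs in H0. rewrite Hsal.
    pose proof (exp_sq_ge B ltac:(lra)) as HEsq. fold E in HEsq.
    assert (Hms : 1 <= INR m * INR s) by nra.
    assert (Hl4 : 0.2 <= ln 2 ^ 4).
    { assert (0.47 <= ln 2 ^ 2) by (simpl; nra). replace (ln 2 ^ 4) with ((ln 2 ^ 2) ^ 2) by ring. simpl. nra. }
    assert (HB2 : 32 * B ^ 2 <= 53 * 17 * ln 2 ^ 2 * (INR m * INR s) * E ^ 2).
    { assert (B ^ 2 * ln 2 ^ 2 <= E ^ 2) by (rewrite <- Rpow_mult_distr; auto).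
      assert (0 <= B ^ 2) by apply pow2_ge_0.
      assert (ln 2 ^ 2 * (B ^ 2 * ln 2 ^ 2) <= ln 2 ^ 2 * E ^ 2) by (apply Rmult_le_compat_l; [apply pow2_ge_0|lra]).
      assert (0 <= ln 2 ^ 2 * E ^ 2) by (apply Rmult_le_pos; apply pow2_ge_0).
      assert (ln 2 ^ 2 * E ^ 2 <= (INR m * INR s) * (ln 2 ^ 2 * E ^ 2)) by nra.
      assert (ln 2 ^ 4 * B ^ 2 = ln 2 ^ 2 * (B ^ 2 * ln 2 ^ 2)) by ring.
      assert (0.2 * B ^ 2 <= ln 2 ^ 4 * B ^ 2) by (apply Rmult_le_compat_r; lra).
      nra. }
    assert (4 * B * sqrt (INR n) / (17 * ln 2 ^ 2) <= 53 * INR m * INR s * E ^ 2 / (8 * B) * sqrt (INR n)).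
    { assert (Hl : 0 < 17 * ln 2 ^ 2) by (apply Rmult_lt_0_compat; [lra|apply pow_lt; lra]).
      apply Rmult_le_reg_r with (8 * B * (17 * ln 2 ^ 2) / sqrt (INR n)).
      apply Rdiv_lt_0_compat; [|lra]. apply Rmult_lt_0_compat; lra.
      replace (4 * B * sqrt (INR n) / (17 * ln 2 ^ 2) * (8 * B * (17 * ln 2 ^ 2) / sqrt (INR n))) with (32 * B ^ 2)
        by (field; repeat split; lra).
      replace (53 * INR m * INR s * E ^ 2 / (8 * B) * sqrt (INR n) * (8 * B * (17 * ln 2 ^ 2) / sqrt (INR n)))
        with (53 * 17 * ln 2 ^ 2 * (INR m * INR s) * E ^ 2) by (field; repeat split; lra).
      exact HB2. }
    assert (35 * INR m * INR s * E ^ 2 / (4 * B) * sqrt (INR n) =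
            17 * INR m * INR s * E ^ 2 * sqrt (INR n) / (8 * B) + 53 * INR m * INR s * E ^ 2 / (8 * B) * sqrt (INR n))
      by (field; lra).
    lra.
  -
    intros s t Hseg. set (al := 10 / (7 * INR m * B ^ 2)).
    assert (Hal : 0 < al) by (unfold al; apply Rdiv_lt_0_compat; [lra|]; apply Rmult_lt_0_compat; [lra|apply pow_lt; lra]).
    pose proof (geo_ogd N m HN Hm eps Heps n x Hx P HP proj Hproj w1 Hw1 Ggeo HGgeo al Hal s t Hseg) as H.
    eapply Rle_trans. eapply fin_self. exact Hal. exact H.
    + apply sum_self. intros d Hd.
      set (w := ogd_w (geo N m) Ggeo proj w1 al x P d).
      assert (Hw : simplex m w) by (apply W_simplex; auto).
      eapply Rle_trans. apply (geo_nrm2 N m eps); auto.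
      pose proof (geo_range N m w (P (S d)) (x (S d)) ltac:(lia) (Hxd d Hd)).
      set (q := geo N m w (P (S d)) (x (S d))) in *.
      unfold codelen, log2. fold q. rewrite Hleps.
      pose proof (ln_le_sub1 q ltac:(lra)).
      replace (INR m * ((1 - q) * (B * ln 2) / ln 2) ^ 2) with (INR m * B ^ 2 * (1 - q) ^ 2) by (field; lra).
      replace (/ al * - (ln q / ln 2)) with (INR m * B ^ 2 * (7 * (- ln q) / (10 * ln 2))) by (unfold al; field; repeat split; lra).
      apply Rmult_le_compat_l. apply Rmult_le_pos; [lra|apply pow2_ge_0].
      apply Rmult_le_reg_r with (10 * ln 2). lra.
      unfold Rdiv. rewrite Rmult_assoc, Rinv_l, Rmult_1_r by lra.
      assert ((1 - q) ^ 2 <= 1 - q) by nra.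
      assert (0 <= (1 - q) ^ 2) by apply pow2_ge_0. nra.
    + pose proof (Hs1 s t Hseg). right. unfold al. field. repeat split; lra.
  -
    intros s t Hseg. set (al := 10 / sqrt (INR n) / (7 * INR m * B ^ 2)).
    assert (Hal : 0 < al) by (unfold al; repeat apply Rdiv_lt_0_compat; try lra; apply Rmult_lt_0_compat; [lra|apply pow_lt; lra]).
    pose proof (geo_ogd N m HN Hm eps Heps n x Hx P HP proj Hproj w1 Hw1 Ggeo HGgeo al Hal s t Hseg) as H.
    assert (Hg : sumN n (fun d => nrm2 m (Ggeo (ogd_w (geo N m) Ggeo proj w1 al x P d) (P (S d)) (x (S d))))
                 <= INR n * (INR m * B ^ 2)).
    { apply sum_max. intros d Hd.
      set (w := ogd_w (geo N m) Ggeo proj w1 al x P d).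
      assert (Hw : simplex m w) by (apply W_simplex; auto).
      eapply Rle_trans. apply (geo_nrm2 N m eps); auto.
      pose proof (geo_range N m w (P (S d)) (x (S d)) ltac:(lia) (Hxd d Hd)).
      set (q := geo N m w (P (S d)) (x (S d))) in *.
      rewrite Hleps.
      replace ((1 - q) * (B * ln 2) / ln 2) with ((1 - q) * B) by (field; lra).
      apply Rmult_le_compat_l. lra. apply pow_incr. split. nra. nra. }
    pose proof (Hs1 s t Hseg) as Hs.
    assert (al / 2 * sumN n (fun d => nrm2 m (Ggeo (ogd_w (geo N m) Ggeo proj w1 al x P d) (P (S d)) (x (S d))))
            <= al / 2 * (INR n * (INR m * B ^ 2))) by (apply Rmult_le_compat_l; lra).
    eapply Rle_trans. exact H.
    assert (Hrhs : al / 2 * (INR n * (INR m * B ^ 2)) = 5 / 7 * sqrt (INR n)).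
    { unfold al. set (r := sqrt (INR n)) in *. rewrite <- Hsq2. field. repeat split; lra. }
    assert (Hsal : INR s / al = 7 * INR m * INR s * B ^ 2 / 10 * sqrt (INR n)).
    { unfold al. field. repeat split; lra. }
    rewrite Hrhs in H0. rewrite Hsal.
    assert (Hms : 1 <= INR m * INR s) by nra.
    assert (1 <= B ^ 2) by nra.
    assert (5 / 7 <= 12 / 10 * (INR m * INR s * B ^ 2)) by nra.
    assert (5 / 7 * sqrt (INR n) <= 12 / 10 * (INR m * INR s * B ^ 2) * sqrt (INR n)) by (apply Rmult_le_compat_r; lra).
    nra.
Qed.
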